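(* For every $*$-term $P$, there exist $X\in\mathcal T_{A,\triangle}$ and $Y\in\mathcal T_A$ such that $se(P)=X[\triangle\mapsto Y]$, $X$ contains a leaf $\triangle$ (possibly $X=\triangle$), and $Y=se(R)$ where $R$ is the rightmost $\ell$-term in $P$.
   Context: Let $A$ be a nonempty set of atoms; terms are closed terms over constants $\mathsf T,\mathsf F$, atoms $a\in A$, unary $\neg$, binary $\land^\circ$, $\lor^\circ$. Evaluation trees $\mathcal T_A$: $\mathsf T,\mathsf F\in\mathcal T_A$ and $(X\unlhd a\unrhd Y)\in\mathcal T_A$ for $X,Y\in\mathcal T_A$, $a\in A$. $\mathcal T_{A,\triangle}$ is defined in the same way but with leaves in $\{\mathsf T,\mathsf F,\triangle\}$ (so $\mathcal T_A\subseteq\mathcal T_{A,\triangle}$). Leaf replacement $X[\ell_1\mapsto Y_1,\ldots]$ replaces every leaf labelled $\ell_i$ by $Y_i$ (recursively: a leaf $\ell_i$ becomes $Y_i$, other leaves unchanged, and $(X_1\unlhd a\unrhd X_2)[\ldots]=X_1[\ldots]\unlhd a\unrhd X_2[\ldots]$). $se$: $se(\mathsf T)=\mathsf T$, $se(\mathsf F)=\mathsf F$, $se(a)=\mathsf T\unlhd a\unrhd\mathsf F$, $se(\neg P)=se(P)[\mathsf T\mapsto\mathsf F,\mathsf F\mapsto\mathsf T]$, $se(P\land^\circ Q)=se(P)[\mathsf T\mapsto se(Q)]$, $se(P\lor^\circ Q)=se(P)[\mathsf F\mapsto se(Q)]$. Syntactic categories ($a\in A$): $\mathsf T$-terms $P^{\mathsf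 T}::=\mathsf T\mid(a\land^\circ P^{\mathsf T})\lor^\circ P^{\mathsf T}$; $\mathsf F$-terms $P^{\mathsf F}::=\mathsf F\mid(a\lor^\circ P^{\mathsf F})\land^\circ P^{\mathsf F}$; $\ell$-terms $P^\ell::=(a\land^\circ P^{\mathsf T})\lor^\circ P^{\mathsf F}\mid(\neg a\land^\circ P^{\mathsf T})\lor^\circ P^{\mathsf F}$; $*$-terms $P^*::=P^c\mid P^d$, $P^c::=P^\ell\mid P^*\land^\circ P^d$, $P^d::=P^\ell\mid P^*\lor^\circ P^c$. A $*$-term is thus built from $\ell$-terms by $\land^\circ$ and $\lor^\circ$; its rightmost $\ell$-term is the last of these $\ell$-terms read from left to right. *)

(* Defs.v *)
From Stdlib Require Import List.

(* Closed terms over T, F, atoms, negation, left-sequential /\ and \/ . *)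
Inductive term (A : Type) : Type :=
| tT : term A
| tF : term A
| tAtom : A -> term A
| tNeg : term A -> term A
| tAnd : term A -> term A -> term A
| tOr  : term A -> term A -> term A.
Arguments tT {A}. Arguments tF {A}. Arguments tAtom {A} _.
Arguments tNeg {A} _. Arguments tAnd {A} _ _. Arguments tOr {A} _ _.

(* Evaluation trees with leaves in {T, F, triangle}: this is T_{A,triangle}. *)
Inductive etree (A : Type) : Type :=
| LT : etree A
| LF : etree A
| LTri : etree A
| Node : etree A -> A -> etree A -> etree A.  (* Node X a Y = X <| a |> Y *)
Arguments LT {A}. Arguments LF {A}. Arguments LTri {A}.
Arguments Node {A} _ _ _.

(* T_A : trees without triangle leaves. *)
Fixpoint no_tri {A} (X : etree A) : Prop :=
  match X with
  | LTri => False
  | Node X1 _ X2 => no_tri X1 /\ no_tri X2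
  | _ => True
  end.

Fixpoint has_tri {A} (X : etree A) : Prop :=
  match X with
  | LTri => True
  | Node X1 _ X2 => has_tri X1 \/ has_tri X2
  | _ => False
  end.

Fixpoint leaf_repl {A} (X : etree A) (YT YF Ytri : etree A) : etree A :=
  match X with
  | LT => YT
  | LF => YF
  | LTri => Ytri
  | Node X1 a X2 => Node (leaf_repl X1 YT YF Ytri) a (leaf_repl X2 YT YF Ytri)
  end.

Fixpoint se {A} (P : term A) : etree A :=
  match P with
  | tT => LT
  | tF => LF
  | tAtom a => Node LT a LF
  | tNeg P => leaf_repl (se P) LF LT LTri
  | tAnd P Q => leaf_repl (se P) (se Q) LF LTri
  | tOr P Q => leaf_repl (se P) LT (se Q) LTri
  end.

Inductive Tterm {A} : term A -> Prop :=
| Tterm_T : Tterm tT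
| Tterm_step : forall (a : A) P Q, Tterm P -> Tterm Q ->
    Tterm (tOr (tAnd (tAtom a) P) Q).

Inductive Fterm {A} : term A -> Prop :=
| Fterm_F : Fterm tF
| Fterm_step : forall (a : A) P Q, Fterm P -> Fterm Q ->
    Fterm (tAnd (tOr (tAtom a) P) Q).

Inductive lterm {A} : term A -> Prop :=
| lterm_pos : forall (a : A) P Q, Tterm P -> Fterm Q ->
    lterm (tOr (tAnd (tAtom a) P) Q)
| lterm_neg : forall (a : A) P Q, Tterm P -> Fterm Q ->
    lterm (tOr (tAnd (tNeg (tAtom a)) P) Q).

Inductive cterm {A} : term A -> Prop :=
| cterm_l : forall P, lterm P -> cterm P
| cterm_and : forall P Q, starterm P -> dterm Q -> cterm (tAnd P Q)
with dterm {A} : term A -> Prop :=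
| dterm_l : forall P, lterm P -> dterm P
| dterm_or : forall P Q, starterm P -> cterm Q -> dterm (tOr P Q)
with starterm {A} : term A -> Prop :=
| star_c : forall P, cterm P -> starterm P
| star_d : forall P, dterm P -> starterm P.

(* Note that an l-term has top-level shape (_ /\ _) \/ Q with Q an F-term,
   never a *-term, so the l-term case must be detected first. *)
Inductive rightmost_l {A} : term A -> term A -> Prop :=
| rm_l : forall P, lterm P -> rightmost_l P P
| rm_and : forall P Q R, starterm P -> dterm Q -> rightmost_l Q R ->
    rightmost_l (tAnd P Q) R
| rm_or : forall P Q R, starterm P -> cterm Q -> rightmost_l Q R ->
    rightmost_l (tOr P Q) R.

(* Main.v *)
Require Import Defs.

Scheme st_ind := Induction for starterm Sort Prop
with ct_ind := Induction for cterm Sort Prop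
with dt_ind := Induction for dterm Sort Prop.

Section S.
Context {A : Type}.

Fixpoint has_leaf (l X : etree A) : Prop :=
  match X with
  | Node X1 _ X2 => has_leaf l X1 \/ has_leaf l X2
  | _ => X = l
  end.

Lemma repl_has (l m : etree A) X YT YF Yt :
  (l = LT \/ l = LF) ->
  has_leaf l X -> has_leaf m (match l with LT => YT | _ => YF end) ->
  has_leaf m (leaf_repl X YT YF Yt).
Proof.
  intros Hl; induction X; simpl; intros H1 H2; subst;
  try (destruct Hl; discriminate); try (destruct Hl; subst; simpl in *; assumption).
  destruct H1; [left|right]; auto.
Qed.

Lemma repl_tri (l X YT YF Yt : etree A) :
  (l = LT \/ l = LF) ->
  has_leaf l X -> has_tri (match l with LT => YT | _ => YF end) ->
  has_tri (leaf_repl X YT YF Yt).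
Proof.
  intros Hl; induction X; simpl; intros H1 H2; subst;
  try (destruct Hl; discriminate); try (destruct Hl; subst; simpl in *; assumption).
  destruct H1; [left|right]; auto.
Qed.

Lemma repl_notri (X YT YF Yt : etree A) :
  no_tri X -> no_tri YT -> no_tri YF -> no_tri (leaf_repl X YT YF Yt).
Proof. induction X; simpl; tauto. Qed.

Lemma se_notri (P : term A) : @no_tri A (se P).
Proof. induction P; simpl; auto; apply repl_notri; simpl; auto. Qed.

Lemma repl_comp (X a b c p q r : etree A) :
  leaf_repl (leaf_repl X a b c) p q r =
  leaf_repl X (leaf_repl a p q r) (leaf_repl b p q r) (leaf_repl c p q r).
Proof. induction X; simpl; congruence. Qed.

Lemma repl_tri_irr (X p q r r0 : etree A) : no_tri X -> leaf_repl X p q r = leaf_repl X p q r0.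
Proof. induction X; simpl; intuition congruence. Qed.

Lemma Tterm_T (P : term A) : Tterm P -> has_leaf LT (se P).
Proof. induction 1; simpl; auto. Qed.

Lemma Fterm_F (P : term A) : Fterm P -> has_leaf LF (se P).
Proof. induction 1; simpl; auto. Qed.

Lemma lterm_TF (P : term A) : lterm P -> has_leaf LT (se P) /\ has_leaf LF (se P).
Proof.
  destruct 1 as [a P Q HP HQ|a P Q HP HQ]; simpl.
  - split; [left; apply (repl_has LT); [auto | apply Tterm_T; auto | simpl; auto] | right; apply Fterm_F; auto].
  - split; [right; apply (repl_has LT); [auto | apply Tterm_T; auto | simpl; auto] | left; apply Fterm_F; auto].
Qed.


Lemma star_TF (P : term A) : starterm P -> has_leaf LT (se P) /\ has_leaf LF (se P).
Proof.
  apply (st_ind A (fun P _ => has_leaf LT (se P) /\ has_leaf LF (se P))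
                (fun P _ => has_leaf LT (se P) /\ has_leaf LF (se P))
                (fun P _ => has_leaf LT (se P) /\ has_leaf LF (se P))); auto.
  - intros P0 l; apply lterm_TF; auto.
  - intros P1 Q1 _ [H1 H2] _ [H3 H4]; simpl; split; apply (repl_has LT); auto.
  - intros P0 l; apply lterm_TF; auto.
  - intros P1 Q1 _ [H1 H2] _ [H3 H4]; simpl; split; apply (repl_has LF); auto.
Qed.

End S.

Theorem lemma3p2 (A : Type) (a0 : A) (P R : term A) :
  starterm P -> rightmost_l P R ->
  exists X Y : etree A,
    se P = leaf_repl X LT LF Y /\ has_tri X /\ no_tri Y /\ Y = se R.
Proof.
  intros _ H; induction H.
  - exists LTri, (se P); simpl; repeat split; auto using se_notri.
  - destruct IHrightmost_l as [X [Y [E [Ht [Hn Hy]]]]].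
    exists (leaf_repl (se P) X LF LTri), Y; repeat split; auto.
    + simpl. rewrite repl_comp. simpl. rewrite <- E.
      apply repl_tri_irr, se_notri.
    + apply (repl_tri LT); auto. apply star_TF; auto.
  - destruct IHrightmost_l as [X [Y [E [Ht [Hn Hy]]]]].
    exists (leaf_repl (se P) LT X LTri), Y; repeat split; auto.
    + simpl. rewrite repl_comp. simpl. rewrite <- E.
      apply repl_tri_irr, se_notri.
    + apply (repl_tri LF); auto. apply star_TF; auto.
Qed.
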